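(* Let $j_0\ge1$ be an integer, $M>0$ and $L>2$. Let $(a_j)_{j\ge1}$, $(b_j)_{j\ge0}$, $(d_j)_{j\ge0}$ be sequences of nonnegative real numbers such that $a_{j_0}\le M$, $b_{j_0}\le M$, $d_{j_0}\le M$, and for all $j\ge j_0+1$: $$b_j\le b_{j-1},\qquad a_j+b_j\le L\,a_{j-1},\qquad d_j\le M2^{-j},$$ and $$\text{if } a_j\ge\tfrac12 a_{j-1}\ \text{and}\ a_j\ge\max\{2^{-j},d_{j-1}\},\ \text{then } b_j\le L(b_{j-1}-b_j).$$ Then there exist $\theta=\theta(L)\in(1/2,1)$ depending only on $L$ and $C_0=C_0(L,j_0)$ depending only on $L$ and $j_0$ such that $$b_{j+1}\le C_0(M+1)\big(\theta^j+j\theta^j\big)\qquad\text{for all } j\ge j_0+1.$$ *)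

(* Defs.v *)
From Stdlib Require Export Reals.
Open Scope R_scope.

(* Main.v *)
Require Import Defs.
From Stdlib Require Import Reals Lra Lia.
Open Scope R_scope.

Lemma pow_le1' : forall x n, 0 <= x <= 1 -> x ^ n <= 1.
Proof.
  intros x n Hx; induction n; simpl; [lra|].
  assert (0 <= x ^ n) by (apply pow_le; lra). nra.
Qed.

Lemma root_le : forall n x y, 0 <= x -> 0 <= y -> x ^ S n <= y ^ S n -> x <= y.
Proof.
  intros n x y Hx Hy H.
  destruct (Rle_lt_dec x y) as [|Hlt]; [assumption|].
  exfalso.
  assert (Hp : 0 < x ^ n) by (apply pow_lt; lra).
  assert (y ^ n <= x ^ n) by (apply pow_incr; lra).
  simpl in H. nra.
Qed.

Lemma bernoulli : forall m e, 0 <= e <= 1 -> 1 - INR m * e <= (1 - e) ^ m.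
Proof.
  intros m e He; induction m.
  - simpl; lra.
  - rewrite S_INR; simpl.
    assert (0 <= 1 - e) by lra. pose proof (pos_INR m).
    assert (0 <= (1 - e) * ((1-e)^m - (1 - INR m * e))) by (apply Rmult_le_pos; lra).
    assert (0 <= INR m * (e * e)) by (apply Rmult_le_pos; nra). nra.
Qed.

Lemma half_pow_shift : forall a k, (/2) ^ (a + k) <= (/2) ^ k.
Proof.
  intros a k. rewrite pow_add.
  assert ((/2)^a <= 1) by (apply pow_le1'; lra).
  assert (0 <= (/2)^k) by (apply pow_le; lra). nra.
Qed.

Theorem lemma3p2 :
  forall L : R, 2 < L ->
  exists theta : R, 1/2 < theta < 1 /\
  forall j0 : nat, (1 <= j0)%nat ->
  exists C0 : R,
  forall (M : R) (a b d : nat -> R),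
    0 < M ->
    (forall j, (1 <= j)%nat -> 0 <= a j) ->
    (forall j, 0 <= b j) ->
    (forall j, 0 <= d j) ->
    a j0 <= M -> b j0 <= M -> d j0 <= M ->
    (forall j, (j0 + 1 <= j)%nat ->
       b j <= b (j - 1)%nat /\
       a j + b j <= L * a (j - 1)%nat /\
       d j <= M * (/ 2) ^ j /\
       ((a j >= / 2 * a (j - 1)%nat /\ a j >= Rmax ((/ 2) ^ j) (d (j - 1)%nat)) ->
          b j <= L * (b (j - 1)%nat - b j))) ->
    forall j, (j0 + 1 <= j)%nat ->
      b (j + 1)%nat <= C0 * (M + 1) * (theta ^ j + INR j * theta ^ j).
Proof.
  intros L HL.
  set (q := L / (1 + L)).
  assert (Hq0 : 0 < q) by (unfold q; apply Rdiv_lt_0_compat; lra).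
  assert (Hq1 : q < 1) by (unfold q; apply (Rmult_lt_reg_r (1+L)); [lra|];
    unfold Rdiv; rewrite Rmult_assoc, Rinv_l; lra).
  destruct (pow_lt_1_zero q ltac:(rewrite Rabs_right; lra) (/(2*L))
     ltac:(apply Rinv_0_lt_compat; lra)) as [N' HN'].
  set (n := S N').
  assert (Hqn : L * q ^ n <= /2).
  { specialize (HN' n ltac:(unfold n; lia)).
    rewrite Rabs_right in HN' by (apply Rle_ge, pow_le; lra).
    apply Rlt_le.
    replace (/2) with (L * / (2 * L)) by (field; lra).
    apply Rmult_lt_compat_l; lra. }
  assert (HnR : 1 <= INR (S n)) by (apply (le_INR 1); lia).
  set (e := / (2 * INR (S n))).
  assert (He : 0 < e <= /4).
  { unfold e; split. apply Rinv_0_lt_compat; lra.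
    apply Rinv_le_contravar; [lra|].
    assert (2 <= INR (S n)) by (apply (le_INR 2); unfold n; lia). lra. }
  exists (1 - e). split; [lra|].
  assert (Hth : /2 <= (1 - e) ^ S n).
  { eapply Rle_trans; [|apply bernoulli; lra].
    unfold e. right. field. lra. }
  intros j0 Hj0.
  exists (2 * L * 2 ^ j0).
  intros M a b d HM Ha Hb Hd Haj0 Hbj0 Hdj0 H.
  assert (HbM : forall k, b (j0 + k)%nat <= M).
  { induction k. rewrite Nat.add_0_r; auto.
    destruct (H (j0 + S k)%nat ltac:(lia)) as [H1 _].
    replace (j0 + S k - 1)%nat with (j0 + k)%nat in H1 by lia. lra. }
  assert (HPhi : forall k, a (j0 + k)%nat * b (j0 + k)%nat ^ n
                    <= 2 * (M + 1) ^ S n * (/2) ^ k).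
  { induction k.
    - rewrite Nat.add_0_r, pow_O. change ((M+1)^S n) with ((M+1)*(M+1)^n).
      assert (0 <= b j0 ^ n) by (apply pow_le; auto).
      assert (b j0 ^ n <= (M+1) ^ n) by (apply pow_incr; split; auto; lra).
      assert (0 <= a j0) by (apply Ha; lia).
      assert (0 <= (M+1) ^ n) by (apply pow_le; lra).
      assert (a j0 * b j0 ^ n <= (M+1) * (M+1)^n) by (apply Rmult_le_compat; lra).
      nra.
    - destruct (H (j0 + S k)%nat ltac:(lia)) as [H1 [H2 [H3 H4]]].
      replace (j0 + S k - 1)%nat with (j0 + k)%nat in H1, H2, H4 by lia.
      set (A := a (j0 + S k)%nat) in *.
      set (A' := a (j0 + k)%nat) in *.
      set (B := b (j0 + S k)%nat) in *.
      set (B' := b (j0 + k)%nat) in *.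
      assert (HA : 0 <= A) by (apply Ha; lia).
      assert (HA' : 0 <= A') by (apply Ha; lia).
      assert (HB : 0 <= B) by apply Hb.
      assert (HB' : 0 <= B') by apply Hb.
      assert (HBn : 0 <= B ^ n) by (apply pow_le; auto).
      assert (HBn' : 0 <= B' ^ n) by (apply pow_le; auto).
      assert (HBB : B ^ n <= B' ^ n) by (apply pow_incr; auto).
      assert (Hk : 0 <= (/2) ^ k) by (apply pow_le; lra).
      assert (HMn : 0 <= (M+1) ^ n) by (apply pow_le; lra).
      change ((/2) ^ S k) with (/2 * (/2) ^ k).
      change ((M+1) ^ S n) with ((M+1) * (M+1) ^ n) in *.
      destruct (Rlt_dec A (/2 * A')) as [Hc1|Hc1].
      +
        assert (A * B ^ n <= /2 * A' * B' ^ n).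
        { apply Rmult_le_compat; lra. }
        nra.
      + destruct (Rlt_dec A (Rmax ((/2) ^ (j0 + S k)) (d (j0 + k)%nat))) as [Hc2|Hc2].
        *
          assert (Hmax : Rmax ((/2) ^ (j0 + S k)) (d (j0 + k)%nat)
                      <= 2 * (M + 1) * (/2 * (/2) ^ k)).
          { apply Rmax_lub.
            - pose proof (half_pow_shift j0 (S k)). simpl in H0. nra.
            - destruct k as [|k'].
              + rewrite Nat.add_0_r. simpl. lra.
              + destruct (H (j0 + S k')%nat ltac:(lia)) as [_ [_ [H5 _]]].
                pose proof (half_pow_shift j0 (S k')).
                simpl in H0 |- *.
                assert (0 <= (/2) ^ k') by (apply pow_le; lra). nra. }
          assert (HBM : B ^ n <= (M+1) ^ n).
          { apply pow_incr. split; auto. pose proof (HbM (S k)). unfold B. lra. }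
          assert (A * B ^ n <= (2 * (M + 1) * (/ 2 * (/ 2) ^ k)) * (M+1)^n).
          { apply Rmult_le_compat; lra. }
          nra.
        *
          assert (Hg : B <= L * (B' - B)) by (apply H4; lra).
          assert (HBq : B <= q * B').
          { unfold q. apply (Rmult_le_reg_r (1 + L)); [lra|].
            unfold Rdiv. replace (L * / (1 + L) * B' * (1 + L)) with (L * B')
              by (field; lra). lra. }
          assert (HBqn : B ^ n <= q ^ n * B' ^ n).
          { rewrite <- Rpow_mult_distr. apply pow_incr; lra. }
          assert (HAL : A <= L * A') by lra.
          assert (Hqn0 : 0 <= q ^ n) by (apply pow_le; lra).
          assert (A * B ^ n <= (L * A') * (q ^ n * B' ^ n)).
          { apply Rmult_le_compat; lra. }
          assert (A' * B' ^ n <= (M + 1) * (M + 1) ^ n * 2 * (/ 2) ^ k) by lra.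
          assert ((L * q ^ n) * (A' * B' ^ n) <= /2 * (A' * B' ^ n)).
          { apply Rmult_le_compat_r; [apply Rmult_le_pos|]; lra. }
          assert ((L * A') * (q ^ n * B' ^ n) = (L * q ^ n) * (A' * B' ^ n)) by ring.
          nra. }
  intros j Hj.
  destruct (Nat.le_exists_sub (j0) j ltac:(lia)) as [k [Hk _]].
  rewrite Nat.add_comm in Hk. subst j.
  destruct (H (j0 + k + 1)%nat ltac:(lia)) as [H1 [H2 _]].
  replace (j0 + k + 1 - 1)%nat with (j0 + k)%nat in H1, H2 by lia.
  assert (0 <= a (j0 + k + 1)%nat) by (apply Ha; lia).
  set (B := b (j0 + k + 1)%nat) in *.
  set (B' := b (j0 + k)%nat) in *.
  set (A' := a (j0 + k)%nat) in *.
  assert (HB : 0 <= B) by apply Hb.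
  assert (HB' : 0 <= B') by apply Hb.
  assert (HBn : B ^ n <= B' ^ n) by (apply pow_incr; auto).
  assert (HBn0 : 0 <= B ^ n) by (apply pow_le; auto).
  pose proof (HPhi k) as HP. fold A' B' in HP.
  set (th := 1 - e) in *.
  assert (Hth0 : 0 < th) by (unfold th; lra).
  assert (Hth2 : /2 <= th) by (unfold th; lra).
  assert (Hs1 : B ^ S n <= L * (2 * (M + 1) ^ S n * (/ 2) ^ k)).
  { change (B ^ S n) with (B * B ^ n).
    assert (B * B ^ n <= (L * A') * B' ^ n).
    { apply Rmult_le_compat; lra. }
    nra. }
  assert (Hk2 : (/2) ^ k <= (th ^ k) ^ S n).
  { rewrite <- pow_mult, Nat.mul_comm, pow_mult. apply pow_incr. split; lra. }
  assert (Hthj : th ^ k <= 2 ^ j0 * th ^ (j0 + k)).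
  { rewrite pow_add.
    assert ((/2) ^ j0 <= th ^ j0) by (apply pow_incr; lra).
    assert (2 ^ j0 * (/2) ^ j0 = 1) by (rewrite <- Rpow_mult_distr, Rinv_r, pow1; lra).
    assert (0 <= th ^ k) by (apply pow_le; lra).
    assert (0 < 2 ^ j0) by (apply pow_lt; lra).
    assert (1 <= 2 ^ j0 * th ^ j0).
    { rewrite <- H4. apply Rmult_le_compat_l; lra. }
    assert (1 * th ^ k <= (2 ^ j0 * th ^ j0) * th ^ k) by (apply Rmult_le_compat_r; lra).
    lra. }
  set (C := 2 * L * 2 ^ j0).
  assert (HC : 1 <= 2 * L) by lra.
  assert (H2j : 0 < 2 ^ j0) by (apply pow_lt; lra).
  assert (Hthk : 0 <= th ^ k) by (apply pow_le; lra).
  assert (Hthj0 : 0 <= th ^ (j0 + k)) by (apply pow_le; lra).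
  assert (Hmain : B <= C * (M + 1) * th ^ (j0 + k)).
  { apply (root_le n); auto.
    - unfold C. repeat apply Rmult_le_pos; lra.
    - eapply Rle_trans; [apply Hs1|].
      replace (C * (M + 1) * th ^ (j0 + k)) with ((2 * L) * ((M + 1) * (2 ^ j0 * th ^ (j0 + k)))) by (unfold C; ring).
      rewrite Rpow_mult_distr.
      assert (HL1 : 2 * L <= (2 * L) ^ S n).
      { change ((2*L)^S n) with (2 * L * (2*L)^n).
        assert (1 <= (2*L)^n) by (rewrite <- (pow1 n); apply pow_incr; lra). nra. }
      rewrite (Rpow_mult_distr (M+1)).
      assert (Hx : (th ^ k) ^ S n <= (2 ^ j0 * th ^ (j0 + k)) ^ S n)
        by (apply pow_incr; lra).
      assert (0 <= (M+1) ^ S n) by (apply pow_le; lra).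
      assert (0 <= (th ^ k) ^ S n) by (apply pow_le; lra).
      assert (0 <= (/2) ^ k) by (apply pow_le; lra).
      assert (Hy : (/2)^k <= (2 ^ j0 * th ^ (j0 + k)) ^ S n) by lra.
      assert (0 <= (M + 1) ^ S n * (2 ^ j0 * th ^ (j0 + k)) ^ S n) by
        (apply Rmult_le_pos; auto; apply pow_le; nra).
      assert (L * (2 * (M + 1) ^ S n * (/ 2) ^ k) <=
              2 * L * ((M + 1) ^ S n * (2 ^ j0 * th ^ (j0 + k)) ^ S n)).
      { replace (L * (2 * (M + 1) ^ S n * (/ 2) ^ k)) with (2 * L * ((M + 1) ^ S n * (/ 2) ^ k)) by ring.
        apply Rmult_le_compat_l; [lra|]. apply Rmult_le_compat_l; auto. }
      nra. }
  assert (0 <= INR (j0 + k)) by apply pos_INR.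
  assert (0 <= C * (M + 1)) by (unfold C; repeat apply Rmult_le_pos; lra).
  assert (0 <= C * (M + 1) * (INR (j0 + k) * th ^ (j0 + k))) by
    (apply Rmult_le_pos; auto; apply Rmult_le_pos; auto).
  replace (j0 + k + 1)%nat with (j0 + k + 1)%nat by reflexivity.
  rewrite Rmult_plus_distr_l. lra.
Qed.
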